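(* Let $G=(V,E)$ be an undirected graph and $\mu$ an orientation of its edges. Let $\mathcal D$ be an AD paths decomposition of $(G,\mu)$ with degree at most 1. Coloring each path in $\mathcal D$ using two alternating colors yields an oriented degree-splitting $(E_1,E_2)$ of $(G,\mu)$ with discrepancy at most 1.
   Context: A path here is a trail $P=(v_0,e_1,v_1,\dots,e_k,v_k)$ (a walk with pairwise distinct edges, vertices may repeat; if $v_0=v_k$ it is called a cycle). $P$ is an alternating-directions (AD) path if for every $1\le i<k$, the edges $e_i,e_{i+1}$ are either both oriented (under $\mu$) towards $v_i$ or both oriented away from $v_i$. $v_0$ is an incoming endpoint of $P$ if $e_1$ is oriented towards $v_0$, and an outgoing endpoint otherwise; symmetrically $v_k$ is an incoming endpoint if $e_k$ is oriented towards $v_k$, and an outgoing endpoint otherwise. An AD paths decomposition of $(G,\mu)$ with degree at most $\kappa$ is a partition of $E$ into edge-disjoint AD paths such that each vertex is an incoming endpoint of at most $\kappa$ of these paths and an outgoing endpoint of at most $\kappa$ of these paths. Coloring a path with two alternating colors means consecutive edges $e_i,e_{i+1}$ of the path receive opposite colors (one of two colors). An oriented degree-splitting with discrepancy $\kappa$ is a partition $(E_1,E_2)$ of $E$ such that for every vertex $v$, the numbers of incoming edges at $v$ in $E_1$ and in $E_2$ differ by at most $\kappa$, and the numbers of outgoing edges at $v$ in $E_1$ and in $E_2$ differ by at most $\kappa$. *)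

(* Defs.v *)
From mathcomp Require Import all_boot all_order all_algebra.
Set Implicit Arguments. Unset Strict Implicit. Unset Printing Implicit Defensive.

(* A finite undirected graph G = (V, E) together with an orientation mu is
   given by a finite vertex type V, a finite edge type E, and for each edge
   its tail and head under mu: the undirected edge e is {tail e, head e}
   and mu orients it tail e -> head e.  "e is oriented towards v" means
   head e == v. *)

Section ADPaths.
Variables (V E : finType) (tail head : E -> V).

Definition simple_graph : Prop :=
  (forall e, tail e != head e) /\
  injective (fun e => [set tail e; head e]).

Definition joins (e : E) (u v : V) : bool :=
  ((tail e == u) && (head e == v)) || ((tail e == v) && (head e == u)).

(* A path P = (v_0, e_1, v_1, ..., e_k, v_k) is represented as the pair
   (v_0, [:: (e_1, v_1); ...; (e_k, v_k)]). *)
Definition gpath := (V * seq (E * V))%type.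

Definition pstart (P : gpath) : V := P.1.
Definition pedges (P : gpath) : seq E := map fst P.2.
Definition pverts (P : gpath) : seq V := P.1 :: map snd P.2.
Definition plen (P : gpath) : nat := size P.2.

(* P is a trail (a walk with pairwise distinct edges, k >= 1) which is an
   alternating-directions path: for every 1 <= i < k, e_i and e_{i+1} are
   both oriented towards v_i or both away from v_i.  (Indices below are
   0-based: edge e_{i+1} is nth _ (pedges P) i, vertex v_i is
   nth _ (pverts P) i.) *)
Definition is_AD_path (P : gpath) : bool :=
  match P.2 with
  | [::] => false
  | (e1, _) :: _ =>
    let es := pedges P in
    let vs := pverts P in
    let v0 := pstart P in
    [&& uniq es,
        all (fun i => joins (nth e1 es i) (nth v0 vs i) (nth v0 vs i.+1))
            (iota 0 (plen P)) &
        all (fun i => (head (nth e1 es i) == nth v0 vs i.+1)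
                      == (head (nth e1 es i.+1) == nth v0 vs i.+1))
            (iota 0 (plen P).-1)]
  end.

Definition incoming_endpoint (v : V) (P : gpath) : bool :=
  match P.2 with
  | [::] => false
  | (e1, _) :: _ =>
    let v0 := pstart P in
    let vk := last v0 (map snd P.2) in
    let ek := last e1 (pedges P) in
    ((v0 == v) && (head e1 == v0)) || ((vk == v) && (head ek == vk))
  end.

Definition outgoing_endpoint (v : V) (P : gpath) : bool :=
  match P.2 with
  | [::] => false
  | (e1, _) :: _ =>
    let v0 := pstart P in
    let vk := last v0 (map snd P.2) in
    let ek := last e1 (pedges P) in
    ((v0 == v) && (head e1 != v0)) || ((vk == v) && (head ek != vk))
  end.

Definition AD_decomposition (D : seq gpath) (kappa : nat) : Prop :=
  [/\ all is_AD_path D,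
      forall e : E, count (fun P => e \in pedges P) D = 1 &
      (forall v : V, count (incoming_endpoint v) D <= kappa /\
                     count (outgoing_endpoint v) D <= kappa)].

Definition alternating_coloring (D : seq gpath) (col : E -> bool) : Prop :=
  forall P, P \in D ->
    forall i, i.+1 < plen P ->
      forall e0 : E,
        col (nth e0 (pedges P) i) != col (nth e0 (pedges P) i.+1).

Definition oriented_degree_splitting (E1 E2 : {set E}) (kappa : nat) : Prop :=
  [/\ E1 :&: E2 = set0, E1 :|: E2 = [set: E] &
      (forall v : V,
        (absz (#|[set e in E1 | head e == v]|%:Z
               - #|[set e in E2 | head e == v]|%:Z)%R <= kappa)%N /\
        (absz (#|[set e in E1 | tail e == v]|%:Z
               - #|[set e in E2 | tail e == v]|%:Z)%R <= kappa)%N)].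
End ADPaths.

(* Main.v *)
Require Import Defs.
From mathcomp Require Import all_boot all_order all_algebra.
Set Implicit Arguments. Unset Strict Implicit. Unset Printing Implicit Defensive.
Import Order.TTheory GRing.Theory Num.Theory.

Section Aux.
Variables (V E : finType) (tail head : E -> V) (col : E -> bool).
Hypothesis noloop : forall e, tail e != head e.

Lemma joins_h1 e u w : joins tail head e u w -> (head e == u) = ~~ (head e == w).
Proof.
move: (noloop e) => NL.
by case/orP=> /andP[/eqP Ht /eqP Hh]; rewrite -?Ht -?Hh ?eqxx //= ?(negbTE NL) // eq_sym (negbTE NL).
Qed.

Lemma joins_t1 e u w : joins tail head e u w -> (tail e == u) = ~~ (head e == u).
Proof.
move: (noloop e) => NL.
by case/orP=> /andP[/eqP Ht /eqP Hh]; rewrite -?Ht -?Hh ?eqxx //= ?(negbTE NL) // eq_sym (negbTE NL).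
Qed.

Lemma joins_t2 e u w : joins tail head e u w -> (tail e == w) = ~~ (head e == w).
Proof.
move: (noloop e) => NL.
by case/orP=> /andP[/eqP Ht /eqP Hh]; rewrite -?Ht -?Hh ?eqxx //= ?(negbTE NL) // eq_sym (negbTE NL).
Qed.

Lemma joins_swap e u w : joins head tail e u w = joins tail head e u w.
Proof. by rewrite /joins orbC andbC [X in _ || X]andbC. Qed.

Fixpoint good (th hd : E -> V) (v0 : V) (ps : seq (E * V)) : bool :=
  match ps with
  | [::] => false
  | (e1, v1) :: ps' => joins th hd e1 v0 v1 &&
      match ps' with
      | [::] => true
      | (e2, _) :: _ => [&& (hd e1 == v1) == (hd e2 == v1), col e1 != col e2 & good th hd v1 ps']
      end
  end.

Lemma good_swap v0 ps : good tail head v0 ps -> good head tail v0 ps.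
Proof.
elim: ps v0 => [|[e1 v1] ps IH] v0 //=.
rewrite joins_swap => /andP[J1]; rewrite J1 /=.
case: ps IH => [|[e2 v2] ps] IH //=.
case/and3P=> H1 H2 H3.
apply/andP; split; last first.
  by apply/andP; split => //; exact: IH v1 H3.
move: H3 => /= /andP[J2 _].
by rewrite (joins_t2 J1) (joins_t1 J2) (eqP H1).
Qed.


Local Open Scope ring_scope.
Definition sg (e : E) : int := if col e then 1 else -1.

Lemma path_sum v v0 e1 v1 ps : good tail head v0 ((e1, v1) :: ps) ->
  \sum_(e <- e1 :: map fst ps) (if head e == v then sg e else 0) =
  (if (v0 == v) && (head e1 == v0) then sg e1 else 0) +
  (if (last v1 (map snd ps) == v) &&
      (head (last e1 (map fst ps)) == last v1 (map snd ps))
   then sg (last e1 (map fst ps)) else 0).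
Proof.
elim: ps v0 e1 v1 => [|[e2 v2] ps IH] v0 e1 v1.
  rewrite /= andbT => J.
  rewrite big_cons big_nil addr0.
  have := joins_h1 J.
  case h0: (head e1 == v0); case h1: (head e1 == v1) => //= _.
    by rewrite -(eqP h0) andbT andbF addr0.
  by rewrite -(eqP h1) andbT andbF add0r.
move=> /= /andP[J1 /and3P[H1 H2 G2]].
rewrite big_cons (IH v1 e2 v2 G2) addrA; congr (_ + _).
have Hs : sg e2 = - sg e1 by rewrite /sg; move: H2; case: (col e1); case: (col e2).
rewrite Hs -(eqP H1).
have := joins_h1 J1.
case h0: (head e1 == v0); case h1: (head e1 == v1) => //= _.
  by rewrite -(eqP h0) andbT andbF addr0.
rewrite -(eqP h1) andbT andbF.
by case: (head e1 == v); rewrite ?addrN ?addr0.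
Qed.

Lemma path_parity v0 e1 v1 ps : good tail head v0 ((e1, v1) :: ps) ->
  (col e1 == col (last e1 (map fst ps))) =
  ((head e1 == v1) == (head (last e1 (map fst ps)) == last v1 (map snd ps))).
Proof.
elim: ps v0 e1 v1 => [|[e2 v2] ps IH] v0 e1 v1.
  by rewrite /= !eqxx.
move=> /= /andP[J1 /and3P[H1 H2 G2]].
have IH2 := IH v1 e2 v2 G2.
move: G2 => /= /andP[J2 _].
move: IH2 H2; rewrite (eqP H1) (joins_h1 J2) /=.
case: (col e1); case: (col e2); case: (head e2 == v2);
  case: (col (last e2 (map fst ps)));
  case: (head (last e2 (map fst ps)) == last v2 (map snd ps)) => //.
Qed.

Lemma good_of v0 ps : ps != [::] ->
 (forall i x0 y0, (i < size ps)%N -> joins tail head (nth x0 (map fst ps) i)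
     (nth y0 (v0 :: map snd ps) i) (nth y0 (v0 :: map snd ps) i.+1)) ->
 (forall i x0 y0, (i.+1 < size ps)%N ->
     (head (nth x0 (map fst ps) i) == nth y0 (v0 :: map snd ps) i.+1) ==
     (head (nth x0 (map fst ps) i.+1) == nth y0 (v0 :: map snd ps) i.+1)) ->
 (forall i x0, (i.+1 < size ps)%N ->
     col (nth x0 (map fst ps) i) != col (nth x0 (map fst ps) i.+1)) ->
 good tail head v0 ps.
Proof.
elim: ps v0 => [|[e1 v1] ps IH] v0 // _ HJ HA HC.
rewrite /=; apply/andP; split; first exact: (HJ 0%N e1 v0).
case: ps IH HJ HA HC => [|[e2 v2] ps] IH HJ HA HC //.
apply/and3P; split.
- exact: (HA 0%N e1 v0).
- exact: (HC 0%N e1).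
- apply: IH => //.
  + by move=> i x0 y0 Hi; apply: (HJ i.+1 x0 y0).
  + by move=> i x0 y0 Hi; apply: (HA i.+1 x0 y0).
  + by move=> i x0 Hi; apply: (HC i.+1 x0).
Qed.

Lemma AD_good v0 ps : is_AD_path tail head (v0, ps) ->
  (forall i, (i.+1 < size ps)%N -> forall e0 : E,
     col (nth e0 (map fst ps) i) != col (nth e0 (map fst ps) i.+1)) ->
  good tail head v0 ps /\ uniq (map fst ps).
Proof.
case: ps => [|[e1 v1] ps] //.
rewrite /is_AD_path => /and3P[U /allP HJ /allP HA] HC.
split => //.
apply: good_of => // [i x0 y0 Hi|i x0 y0 Hi|i x0 Hi]; last exact: HC.
- have := HJ i; rewrite mem_iota leq0n add0n => /(_ Hi) H.
  have {H} H : joins tail head (nth e1 (map fst ((e1, v1) :: ps)) i)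
     (nth v0 (v0 :: map snd ((e1, v1) :: ps)) i)
     (nth v0 (v0 :: map snd ((e1, v1) :: ps)) i.+1) := H.
  move: H.
  rewrite (set_nth_default x0 e1); last by rewrite size_map.
  rewrite (set_nth_default y0 v0 (n := i)); last by rewrite /= size_map ltnS ltnW.
  by rewrite (set_nth_default y0 v0 (n := i.+1)) // /= size_map.
- have := HA i; rewrite mem_iota leq0n add0n => /(_ Hi) H.
  have {H} H : (head (nth e1 (map fst ((e1, v1) :: ps)) i) ==
     nth v0 (v0 :: map snd ((e1, v1) :: ps)) i.+1) ==
    (head (nth e1 (map fst ((e1, v1) :: ps)) i.+1) ==
     nth v0 (v0 :: map snd ((e1, v1) :: ps)) i.+1) := H.
  move: H.
  rewrite (set_nth_default x0 e1 (n := i)); last by rewrite size_map ltnW.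
  rewrite (set_nth_default x0 e1 (n := i.+1)); last by rewrite size_map.
  by rewrite (set_nth_default y0 v0 (n := i.+1)) // /= size_map ltnW.
Qed.

Lemma path_bound v (P : gpath V E) : good tail head P.1 P.2 ->
  `|\sum_(e <- pedges P) (if head e == v then sg e else 0)| <=
    (incoming_endpoint head v P)%:R.
Proof.
case: P => v0 [|[e1 v1] ps] // G.
have J1 : joins tail head e1 v0 v1 by case/andP: G.
have Hpar := path_parity G.
rewrite (path_sum v G) /incoming_endpoint /=.
set ek := last e1 (map fst ps); set vk := last v1 (map snd ps).
case a: ((v0 == v) && (head e1 == v0)); case b: ((vk == v) && (head ek == vk)) => /=.
- move/andP: a => [_ a]; move/andP: b => [_ b].
  move: Hpar; rewrite -/ek -/vk b -(negbK (head e1 == v1)) -(joins_h1 J1) a /=.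
  by rewrite /sg; case: (col e1); case: (col ek).
- by rewrite addr0 /sg; case: (col e1).
- by rewrite add0r /sg; case: (col ek).
- by rewrite addr0.
Qed.

Lemma sum_bound (X : eqType) (D : seq X) (f : X -> int) (p : pred X) :
  (forall P, P \in D -> `|f P| <= (p P)%:R) ->
  `|\sum_(P <- D) f P| <= (count p D)%:R.
Proof.
elim: D => [|P D IH] H; first by rewrite big_nil.
rewrite big_cons /= natrD.
apply: le_trans (ler_normD _ _) _.
apply: lerD; first by apply: H; rewrite mem_head.
by apply: IH => Q HQ; apply: H; rewrite in_cons HQ orbT.
Qed.

Lemma total_disc v (D : seq (gpath V E)) :
  (forall P, P \in D -> good tail head P.1 P.2 /\ uniq (pedges P)) ->
  (forall e : E, count (fun P => e \in pedges P) D = 1%N) ->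
  `|\sum_(e : E) (if head e == v then sg e else 0)| <=
    (count (incoming_endpoint head v) D)%:R.
Proof.
move=> HD HE.
set F := fun e => if head e == v then sg e else 0.
have -> : \sum_(e : E) F e = \sum_(P <- D) \sum_(e <- pedges P) F e.
  transitivity (\sum_(P <- D) \sum_(e : E) (if e \in pedges P then F e else 0)).
    rewrite exchange_big /=; apply: eq_bigr => e _.
    rewrite -(big_mkcond (fun P => e \in pedges P) (fun _ => F e)) /= big_const_seq HE /= addr0 //.
  apply: eq_big_seq => P HP.
  have [_ U] := HD _ HP.
  by rewrite [RHS]big_uniq // [RHS]big_mkcond.
apply: sum_bound => P HP; apply: path_bound.
by case: (HD _ HP).
Qed.

Lemma good_last v0 e1 v1 ps : good tail head v0 ((e1, v1) :: ps) ->
  exists u, joins tail head (last e1 (map fst ps)) u (last v1 (map snd ps)).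
Proof.
elim: ps v0 e1 v1 => [|[e2 v2] ps IH] v0 e1 v1.
  by rewrite /= andbT => J; exists v0.
move=> /= /andP[_ /and3P[_ _ G2]].
exact: (IH v1 e2 v2 G2).
Qed.

Lemma out_in v (P : gpath V E) : good tail head P.1 P.2 ->
  outgoing_endpoint head v P = incoming_endpoint tail v P.
Proof.
case: P => v0 [|[e1 v1] ps] // G.
have J1 : joins tail head e1 v0 v1 by case/andP: G.
have [u Jk] := good_last G.
rewrite /outgoing_endpoint /incoming_endpoint /=.
by rewrite (joins_t1 J1) (joins_t2 Jk).
Qed.

End Aux.

Lemma card_diff (V E : finType) (col : E -> bool) (h : E -> V) v :
  (#|[set e in [set e | col e] | h e == v]|%:Z -
   #|[set e in [set e | ~~ col e] | h e == v]|%:Z)%R =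
  (\sum_(e : E) (if h e == v then sg col e else 0))%R.
Proof.
rewrite -!natz -!sumr_const !(big_mkcond (fun e => e \in _)) -sumrB.
apply: eq_bigr => e _; rewrite !inE /sg.
by case: (col e); case: (h e == v).
Qed.

Lemma absz_le1 (z : int) : (`|z| <= 1)%R -> (absz z <= 1)%N.
Proof. by rewrite -abszE lez_nat. Qed.

Theorem theorem4p5 (V E : finType) (tail head : E -> V)
    (D : seq (gpath V E)) (col : E -> bool) :
  simple_graph tail head ->
  AD_decomposition tail head D 1 ->
  alternating_coloring D col ->
  oriented_degree_splitting tail head [set e | col e] [set e | ~~ col e] 1.
Proof.
move=> [NL _] [/allP HAD HE Hdeg] HC.
have NL' : forall e, head e != tail e by move=> e; rewrite eq_sym.
have HG : forall P, P \in D -> good col tail head P.1 P.2 /\ uniq (pedges P).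
  move=> [v0 ps] HP.
  exact: (AD_good (HAD _ HP) (fun i Hi e0 => HC _ HP i Hi e0)).
have HG' : forall P, P \in D -> good col head tail P.1 P.2 /\ uniq (pedges P).
  by move=> P HP; case: (HG P HP) => G U; split => //; apply: good_swap.
split.
- by apply/setP => e; rewrite !inE; case: (col e).
- by apply/setP => e; rewrite !inE; case: (col e).
move=> v; have [H1 H2] := Hdeg v; split; apply: absz_le1; rewrite card_diff.
- apply: le_trans (total_disc NL v HG HE) _.
  by rewrite -[1%R]/(1%:R)%R ler_nat.
- apply: le_trans (total_disc NL' v HG' HE) _.
  rewrite -[1%R]/(1%:R)%R ler_nat.
  rewrite -(@eq_in_count _ (outgoing_endpoint head v)); first exact H2.
  by move=> P HP; apply: (out_in NL); exact: (HG P HP).1.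
Qed.
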